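(* Let $q$ be a nonzero complex number which is not a root of unity, and let $\mu(u)=\sum_{r\ge0}\mu^{(r)}u^{-r}$, $\bar\mu(u)=\sum_{r\ge0}\bar\mu^{(r)}u^r$ be formal series with complex coefficients. If the irreducible highest weight representation $V(\mu(u);\bar\mu(u))$ of $\mathrm{Y}'_q(\mathfrak{sp}_2)$ is finite-dimensional, then both $\mu^{(0)}$ and $\bar\mu^{(0)}$ are nonzero.
   Context: $R(u,v)=(u-v)\sum_{i\ne j}E_{ii}\otimes E_{jj}+(q^{-1}u-qv)\sum_i E_{ii}\otimes E_{ii}+(q^{-1}-q)u\sum_{i>j}E_{ij}\otimes E_{ji}+(q^{-1}-q)v\sum_{i<j}E_{ij}\otimes E_{ji}$ with indices in $\{1,2\}$. $\mathrm{U}^{\rm ext}_q(\widehat{\mathfrak{gl}}_2)$ is the algebra with generators $t_{ij}^{(r)},\bar t_{ij}^{(r)}$ ($r\ge0$), $(t_{ii}^{(0)})^{-1},(\bar t_{ii}^{(0)})^{-1}$, series $t_{ij}(u)=\sum_rt_{ij}^{(r)}u^{-r}$, $\bar t_{ij}(u)=\sum_r\bar t_{ij}^{(r)}u^r$, matrices $T(u)=\sum t_{ij}(u)\otimes E_{ij}$, $\overline T(u)=\sum \bar t_{ij}(u)\otimes E_{ij}$ and relations $t_{12}^{(0)}=\bar t_{21}^{(0)}=0$, $t_{ii}^{(0)}\bar t_{ii}^{(0)}=\bar t_{ii}^{(0)}t_{ii}^{(0)}$, inverse relations, $R(u,v)T_1(u)T_2(v)=T_2(v)T_1(u)R(u,v)$,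 $R(u,v)\overline T_1(u)\overline T_2(v)=\overline T_2(v)\overline T_1(u)R(u,v)$, $R(u,v)\overline T_1(u)T_2(v)=T_2(v)\overline T_1(u)R(u,v)$. $\mathrm{Y}'_q(\mathfrak{sp}_2)$ is its subalgebra generated by the coefficients of $s_{ij}(u)=q\,t_{i1}(u)\bar t_{j2}(u^{-1})-t_{i2}(u)\bar t_{j1}(u^{-1})$ and by $(s_{12}^{(0)})^{-1}$; $\bar s_{ij}(u)=q\,\bar t_{i1}(u)t_{j2}(u^{-1})-\bar t_{i2}(u)t_{j1}(u^{-1})$. $V(\mu(u);\bar\mu(u))$ is the unique irreducible quotient of the Verma module, the quotient of $\mathrm{Y}'_q(\mathfrak{sp}_2)$ by the left ideal generated by the coefficients of $s_{11}(u)$, $s_{21}(u)-\mu(u)$ and $\bar s_{21}(u)-\bar\mu(u)$. *)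

(* Defs.v *)
From HB Require Import structures.
From mathcomp Require Import all_boot all_order all_algebra.
From mathcomp Require Import complex.
From mathcomp Require Import Rstruct.
Set Implicit Arguments. Unset Strict Implicit. Unset Printing Implicit Defensive.
Import Order.TTheory GRing.Theory Num.Theory.
Local Open Scope ring_scope.

Notation C := (complex Rdefinitions.R).

(* Indices 1 and 2 of the paper are ord0 and ord_max in 'I_2. *)
Definition i1 : 'I_2 := ord0.
Definition i2 : 'I_2 := ord_max.

(* Generators of the free algebra:
   GT i j r = t_ij^(r), GTb i j r = \bar t_ij^(r),
   GTinv i = (t_ii^(0))^{-1}, GTbinv i = (\bar t_ii^(0))^{-1}. *)
Inductive gen : Type :=
| GT of 'I_2 & 'I_2 & nat
| GTb of 'I_2 & 'I_2 & nat
| GTinv of 'I_2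
| GTbinv of 'I_2.

Inductive term : Type :=
| Cst of C
| Gv of gen
| Add of term & term
| Mul of term & term.

Definition tsum (A : Type) (s : seq A) (f : A -> term) : term :=
  foldr (fun a acc => Add (f a) acc) (Cst 0) s.

(* Coefficient of E_ab (x) E_cd in R(u,v), as the pair (alpha, beta)
   meaning alpha * u + beta * v. *)
Definition Rc (q : C) (a b c d : 'I_2) : C * C :=
  if (a == b) && (c == d) then
    (if a == c then (q^-1, - q) else (1, -1))
  else if (a != b) && (c == b) && (d == a) then
    (if (b < a)%N then (q^-1 - q, 0) else (0, q^-1 - q))
  else (0, 0).

(* Coefficient of u^r (r : int) in the series t_ij(u) = sum_r t_ij^(r) u^(-r)
   and in \bar t_ij(u) = sum_r \bar t_ij^(r) u^r. *)
Definition tco (i j : 'I_2) (r : int) : term :=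
  if r <= 0 then Gv (GT i j `|r|%N) else Cst 0.
Definition tbco (i j : 'I_2) (r : int) : term :=
  if 0 <= r then Gv (GTb i j `|r|%N) else Cst 0.

(* Relation R(u,v) X_1(u) Y_2(v) = Y_2(v) X_1(u) R(u,v), where X, Y give the
   coefficient of u^k of the entries of the matrices X(u), Y(v).
   Entry at E_af (x) E_ch, coefficient of u^m v^n. *)
Definition rxy_lhs q (X Y : 'I_2 -> 'I_2 -> int -> term) (a f c h : 'I_2)
    (m n : int) : term :=
  tsum (enum 'I_2) (fun b => tsum (enum 'I_2) (fun d =>
    Add (Mul (Cst (Rc q a b c d).1) (Mul (X b f (m - 1)) (Y d h n)))
        (Mul (Cst (Rc q a b c d).2) (Mul (X b f m) (Y d h (n - 1)))))).
Definition rxy_rhs q (X Y : 'I_2 -> 'I_2 -> int -> term) (a f c h : 'I_2)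
    (m n : int) : term :=
  tsum (enum 'I_2) (fun b => tsum (enum 'I_2) (fun d =>
    Add (Mul (Cst (Rc q b f d h).1) (Mul (Y c d n) (X a b (m - 1))))
        (Mul (Cst (Rc q b f d h).2) (Mul (Y c d (n - 1)) (X a b m))))).

Inductive defrel (q : C) : term -> term -> Prop :=
| dr_t12 : defrel q (Gv (GT i1 i2 0)) (Cst 0)
| dr_tb21 : defrel q (Gv (GTb i2 i1 0)) (Cst 0)
| dr_comm i : defrel q (Mul (Gv (GT i i 0)) (Gv (GTb i i 0)))
                       (Mul (Gv (GTb i i 0)) (Gv (GT i i 0)))
| dr_tinvr i : defrel q (Mul (Gv (GT i i 0)) (Gv (GTinv i))) (Cst 1)
| dr_tinvl i : defrel q (Mul (Gv (GTinv i)) (Gv (GT i i 0))) (Cst 1)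
| dr_tbinvr i : defrel q (Mul (Gv (GTb i i 0)) (Gv (GTbinv i))) (Cst 1)
| dr_tbinvl i : defrel q (Mul (Gv (GTbinv i)) (Gv (GTb i i 0))) (Cst 1)
| dr_TT a f c h m n :
    defrel q (rxy_lhs q tco tco a f c h m n) (rxy_rhs q tco tco a f c h m n)
| dr_TbTb a f c h m n :
    defrel q (rxy_lhs q tbco tbco a f c h m n) (rxy_rhs q tbco tbco a f c h m n)
| dr_TbT a f c h m n :
    defrel q (rxy_lhs q tbco tco a f c h m n) (rxy_rhs q tbco tco a f c h m n).

(* Equality in U^ext_q(\hat gl_2): the congruence on terms generated by the
   axioms of unital associative C-algebras and the defining relations, i.e.
   the free algebra modulo the two-sided ideal generated by the relations. *)
Inductive aeq (q : C) : term -> term -> Prop :=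
| ae_rel x y : defrel q x y -> aeq q x y
| ae_refl x : aeq q x x
| ae_sym x y : aeq q x y -> aeq q y x
| ae_trans x y z : aeq q x y -> aeq q y z -> aeq q x z
| ae_add x x' y y' : aeq q x x' -> aeq q y y' -> aeq q (Add x y) (Add x' y')
| ae_mul x x' y y' : aeq q x x' -> aeq q y y' -> aeq q (Mul x y) (Mul x' y')
| ae_addA x y z : aeq q (Add x (Add y z)) (Add (Add x y) z)
| ae_addC x y : aeq q (Add x y) (Add y x)
| ae_add0 x : aeq q (Add (Cst 0) x) x
| ae_addN x : aeq q (Add x (Mul (Cst (-1)) x)) (Cst 0)
| ae_mulA x y z : aeq q (Mul x (Mul y z)) (Mul (Mul x y) z)
| ae_mul1l x : aeq q (Mul (Cst 1) x) x
| ae_mul1r x : aeq q (Mul x (Cst 1)) x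
| ae_mulDl x y z : aeq q (Mul (Add x y) z) (Add (Mul x z) (Mul y z))
| ae_mulDr x y z : aeq q (Mul x (Add y z)) (Add (Mul x y) (Mul x z))
| ae_cstD a b : aeq q (Cst (a + b)) (Add (Cst a) (Cst b))
| ae_cstM a b : aeq q (Cst (a * b)) (Mul (Cst a) (Cst b))
| ae_cstC a x : aeq q (Mul (Cst a) x) (Mul x (Cst a)).

Definition tN (i j : 'I_2) (r : nat) : term := Gv (GT i j r).
Definition tbN (i j : 'I_2) (r : nat) : term := Gv (GTb i j r).

(* s_ij^(r): coefficient of u^(-r) in
   s_ij(u) = q t_i1(u) \bar t_j2(u^-1) - t_i2(u) \bar t_j1(u^-1). *)
Definition s_coef (q : C) (i j : 'I_2) (r : nat) : term :=
  tsum (iota 0 r.+1) (fun a =>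
    Add (Mul (Cst q) (Mul (tN i i1 a) (tbN j i2 (r - a))))
        (Mul (Cst (-1)) (Mul (tN i i2 a) (tbN j i1 (r - a))))).

(* \bar s_ij^(r): coefficient of u^r in
   \bar s_ij(u) = q \bar t_i1(u) t_j2(u^-1) - \bar t_i2(u) t_j1(u^-1). *)
Definition sb_coef (q : C) (i j : 'I_2) (r : nat) : term :=
  tsum (iota 0 r.+1) (fun a =>
    Add (Mul (Cst q) (Mul (tbN i i1 a) (tN j i2 (r - a))))
        (Mul (Cst (-1)) (Mul (tbN i i2 a) (tN j i1 (r - a))))).

(* Membership in the subalgebra Y'_q(sp_2) of U^ext_q(\hat gl_2), generated
   by the coefficients of the s_ij(u) and by the inverse of s_12^(0). *)
Inductive inY (q : C) : term -> Prop :=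
| Y_cst c : inY q (Cst c)
| Y_s i j r : inY q (s_coef q i j r)
| Y_sinv x : aeq q (Mul x (s_coef q i1 i2 0)) (Cst 1) ->
             aeq q (Mul (s_coef q i1 i2 0) x) (Cst 1) -> inY q x
| Y_add x y : inY q x -> inY q y -> inY q (Add x y)
| Y_mul x y : inY q x -> inY q y -> inY q (Mul x y)
| Y_eq x y : inY q x -> aeq q x y -> inY q y.

Definition is_lideal (q : C) (L : term -> Prop) : Prop :=
  [/\ (forall x y, aeq q x y -> L x -> L y),
      (forall x, L x -> inY q x),
      L (Cst 0),
      (forall x y, L x -> L y -> L (Add x y)) &
      (forall y x, inY q y -> L x -> L (Mul y x))].

(* Generators of the left ideal defining the Verma module:
   coefficients of s_11(u), s_21(u) - mu(u), \bar s_21(u) - \bar mu(u). *)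
Definition verma_gen (q : C) (mu mub : nat -> C) (x : term) : Prop :=
  exists r : nat,
    [\/ x = s_coef q i1 i1 r,
        x = Add (s_coef q i2 i1 r) (Cst (- mu r)) |
        x = Add (sb_coef q i2 i1 r) (Cst (- mub r))].

(* Y'/L is an irreducible quotient of the Verma module Y'/J, i.e. L is a
   left ideal of Y' containing J, proper, and maximal among proper left
   ideals. (By the paper, this quotient is unique: it is V(mu(u);\bar mu(u)).) *)
Definition irr_verma_quot (q : C) (mu mub : nat -> C) (L : term -> Prop) : Prop :=
  [/\ is_lideal q L,
      (forall g, verma_gen q mu mub g -> L g),
      ~ L (Cst 1) &
      (forall L' : term -> Prop, is_lideal q L' -> (forall x, L x -> L' x) ->
          ~ L' (Cst 1) -> forall x, L' x -> L x)].

(* Y'/L is finite-dimensional over C: finitely many elements of Y' span it. *)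
Definition fin_dim_quot (q : C) (L : term -> Prop) : Prop :=
  exists bs : seq term,
    (forall k, (k < size bs)%N -> inY q (nth (Cst 0) bs k)) /\
    forall y, inY q y -> exists cs : seq C,
      L (Add y (Mul (Cst (-1))
                    (tsum (zip cs bs) (fun p => Mul (Cst p.1) p.2)))).

(* Main.v *)
Require Import Defs.
From HB Require Import structures.
From mathcomp Require Import all_boot all_order all_algebra.
From mathcomp Require Import complex.
From mathcomp Require Import Rstruct.
From mathcomp Require Import ring.
From Stdlib Require Import Setoid Morphisms PeanoNat IndefiniteDescription.
Import Order.TTheory GRing.Theory Num.Theory.
Local Open Scope ring_scope.


Lemma ae_equiv (q : C) : Equivalence (aeq q).
Proof. split; [exact: ae_refl | exact: ae_sym | exact: ae_trans]. Qed.
#[export] Existing Instance ae_equiv.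
#[export] Instance ae_add_proper (q : C) : Proper (aeq q ==> aeq q ==> aeq q) Add.
Proof. by move=> ? ? ? ? ? ?; apply: ae_add. Qed.
#[export] Instance ae_mul_proper (q : C) : Proper (aeq q ==> aeq q ==> aeq q) Mul.
Proof. by move=> ? ? ? ? ? ?; apply: ae_mul. Qed.

Lemma ae_addr0 q x : aeq q (Add x (Cst 0)) x.
Proof. rewrite ae_addC ae_add0; reflexivity. Qed.

Lemma ae_mul0 q x : aeq q (Mul (Cst 0) x) (Cst 0).
Proof.
set z := Mul (Cst 0) x.
have hz : aeq q z (Add z z).
  rewrite /z -ae_mulDl -ae_cstD addr0; reflexivity.
rewrite -(ae_addN q z).
rewrite {2}hz -ae_addA ae_addN ae_addr0; reflexivity.
Qed.

Lemma ae_mulr0 q x : aeq q (Mul x (Cst 0)) (Cst 0).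
Proof. rewrite -ae_cstC ae_mul0; reflexivity. Qed.


Ltac rfl := reflexivity.

Lemma ae_cstM2 q a b x : aeq q (Mul (Cst a) (Mul (Cst b) x)) (Mul (Cst (a * b)) x).
Proof. rewrite ae_mulA -ae_cstM; rfl. Qed.

Lemma ae_pullL q a y z : aeq q (Mul (Mul (Cst a) y) z) (Mul (Cst a) (Mul y z)).
Proof. rewrite ae_mulA; rfl. Qed.

Lemma ae_pullR q a y z : aeq q (Mul y (Mul (Cst a) z)) (Mul (Cst a) (Mul y z)).
Proof. rewrite ae_mulA -(ae_cstC q a y) -ae_mulA; rfl. Qed.

Lemma ae_sub0 q x y : aeq q (Add x (Mul (Cst (-1)) y)) (Cst 0) -> aeq q x y.
Proof.
move=> h.
have h2 : aeq q (Add (Mul (Cst (-1)) y) y) (Cst 0) by rewrite ae_addC ae_addN; rfl.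
rewrite -(ae_addr0 q x) -h2 ae_addA h ae_add0; rfl.
Qed.

Definition oeqb (i j : 'I_2) := Nat.eqb (nat_of_ord i) (nat_of_ord j).

Lemma oeqbP {i j} : oeqb i j = true -> i = j.
Proof. by rewrite /oeqb => /Nat.eqb_eq h; apply: val_inj. Qed.

Definition geneqb (g h : gen) : bool :=
  match g, h with
  | GT i j r, GT i' j' r' => oeqb i i' && oeqb j j' && Nat.eqb r r'
  | GTb i j r, GTb i' j' r' => oeqb i i' && oeqb j j' && Nat.eqb r r'
  | GTinv i, GTinv i' => oeqb i i'
  | GTbinv i, GTbinv i' => oeqb i i'
  | _, _ => false
  end.

Lemma geneqbP {g h} : geneqb g h = true -> g = h.
Proof.
case: g; case: h => //=.
- by move=> ? ? ? ? ? ? /andP[/andP[/oeqbP -> /oeqbP ->] /Nat.eqb_eq ->].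
- by move=> ? ? ? ? ? ? /andP[/andP[/oeqbP -> /oeqbP ->] /Nat.eqb_eq ->].
- by move=> ? ? /oeqbP ->.
- by move=> ? ? /oeqbP ->.
Qed.

Fixpoint wordeqb (u w : seq gen) : bool :=
  match u, w with
  | [::], [::] => true
  | x :: u', y :: w' => geneqb x y && wordeqb u' w'
  | _, _ => false
  end.

Lemma wordeqbP {u w} : wordeqb u w = true -> u = w.
Proof.
elim: u w => [|x u IH] [|y w] //= /andP[/geneqbP -> /IH ->] //.
Qed.

Definition poly := seq (C * seq gen).

Definition mono (w : seq gen) : term := foldr (fun g acc => Mul (Gv g) acc) (Cst 1) w.
Definition reify (p : poly) : term :=
  foldr (fun m acc => Add (Mul (Cst m.1) (mono m.2)) acc) (Cst 0) p.

Fixpoint app (p1 p2 : poly) : poly :=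
  match p1 with [::] => p2 | m :: p => m :: app p p2 end.

Fixpoint mulm (c : C) (w : seq gen) (p : poly) : poly :=
  match p with [::] => [::] | m :: p' => (c * m.1, w ++ m.2) :: mulm c w p' end.

Fixpoint mulp (p1 p2 : poly) : poly :=
  match p1 with [::] => [::] | m :: p => app (mulm m.1 m.2 p2) (mulp p p2) end.

Fixpoint nf (x : term) : poly :=
  match x with
  | Cst c => [:: (c, [::])]
  | Gv g => [:: (1, [:: g])]
  | Add x y => app (nf x) (nf y)
  | Mul x y => mulp (nf x) (nf y)
  end.

Lemma mono_cat q w1 w2 : aeq q (mono (w1 ++ w2)) (Mul (mono w1) (mono w2)).
Proof.
elim: w1 => [|g w1 IH] /=; first by rewrite ae_mul1l; rfl.
rewrite IH ae_mulA; rfl.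
Qed.

Lemma reify_app q p1 p2 : aeq q (reify (app p1 p2)) (Add (reify p1) (reify p2)).
Proof.
elim: p1 => [|m p IH] /=; first by rewrite ae_add0; rfl.
rewrite IH ae_addA; rfl.
Qed.

Lemma reify_mulm q c w p :
  aeq q (reify (mulm c w p)) (Mul (Mul (Cst c) (mono w)) (reify p)).
Proof.
elim: p => [|m p IH] /=; first by rewrite ae_mulr0; rfl.
rewrite IH ae_mulDr; apply: ae_add; last rfl.
rewrite mono_cat ae_pullL ae_pullR ae_cstM2 ae_mulA; rfl.
Qed.

Lemma reify_mulp q p1 p2 : aeq q (reify (mulp p1 p2)) (Mul (reify p1) (reify p2)).
Proof.
elim: p1 => [|m p IH] /=; first by rewrite ae_mul0; rfl.
rewrite reify_app reify_mulm IH ae_mulDl; rfl.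
Qed.

Lemma nf_sound q x : aeq q x (reify (nf x)).
Proof.
elim: x => [c|g|x IHx y IHy|x IHx y IHy] /=.
- rewrite ae_addr0 ae_mul1r; rfl.
- rewrite ae_addr0 ae_mul1l ae_mul1r; rfl.
- rewrite reify_app -IHx -IHy; rfl.
- rewrite reify_mulp -IHx -IHy; rfl.
Qed.

Definition rule := (seq gen * poly)%type.

Fixpoint prefixb (u w : seq gen) : option (seq gen) :=
  match u, w with
  | [::], w => Some w
  | x :: u', y :: w' => if geneqb x y then prefixb u' w' else None
  | _, [::] => None
  end.

Lemma prefixbP {u w r} : prefixb u w = Some r -> w = u ++ r.
Proof.
elim: u w => [|x u IH] [|y w] //=; try by case=> ->.
case E: (geneqb x y) => // /IH ->; by rewrite (geneqbP E).
Qed.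

Fixpoint findocc (u w : seq gen) : option (seq gen * seq gen) :=
  match prefixb u w with
  | Some r => Some ([::], r)
  | None => match w with
            | [::] => None
            | y :: w' => match findocc u w' with
                         | Some (w1, w2) => Some (y :: w1, w2)
                         | None => None
                         end
            end
  end.

Lemma findoccP {u w w1 w2} : findocc u w = Some (w1, w2) -> w = w1 ++ u ++ w2.
Proof.
elim: w w1 w2 => [|y w IH] w1 w2 /=.
  case E: (prefixb u [::]) => [r|] //; case=> <- <-; exact: prefixbP E.
case E: (prefixb u (y :: w)) => [r|]; first by case=> <- <-; exact: prefixbP E.
case F: (findocc u w) => [[a b]|] //; case=> <- <-; by rewrite (IH _ _ F).
Qed.

Fixpoint subst_m (c : C) (w1 w2 : seq gen) (p : poly) : poly :=
  match p with [::] => [::] | m :: p' => (c * m.1, w1 ++ m.2 ++ w2) :: subst_m c w1 w2 p' end.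

Fixpoint rwm (rs : seq rule) (c : C) (w : seq gen) : option poly :=
  match rs with
  | [::] => None
  | r :: rs' => match findocc r.1 w with
                | Some (w1, w2) => Some (subst_m c w1 w2 r.2)
                | None => rwm rs' c w
                end
  end.

Fixpoint step (rs : seq rule) (p : poly) : poly :=
  match p with
  | [::] => [::]
  | m :: p' => match rwm rs m.1 m.2 with
               | Some p1 => app p1 (step rs p')
               | None => m :: step rs p'
               end
  end.

Fixpoint normf (rs : seq rule) (n : nat) (p : poly) : poly :=
  match n with 0 => p | n'.+1 => normf rs n' (step rs p) end.

Definition rules_ok q (rs : seq rule) :=
  forall r, List.In r rs -> aeq q (mono r.1) (reify r.2).

Lemma subst_m_sound q c w1 w2 p :
  aeq q (reify (subst_m c w1 w2 p))
        (Mul (Cst c) (Mul (mono w1) (Mul (reify p) (mono w2)))).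
Proof.
elim: p => [|m p IH] /=.
  rewrite ae_mul0 ae_mulr0 ae_mulr0; rfl.
rewrite IH !ae_mulDl !ae_mulDr; apply: ae_add; last rfl.
rewrite !mono_cat ae_pullL ae_pullR ae_cstM2; rfl.
Qed.

Lemma rwm_sound {q rs c w p} : rules_ok q rs -> rwm rs c w = Some p ->
  aeq q (Mul (Cst c) (mono w)) (reify p).
Proof.
elim: rs => [|r rs IH] //= hok.
case E: (findocc r.1 w) => [[w1 w2]|].
  case=> <-; rewrite subst_m_sound (findoccP E) !mono_cat.
  rewrite (hok r (or_introl erefl)); rfl.
apply: IH => r' hr'; apply: hok; by right.
Qed.

Lemma step_sound q rs p : rules_ok q rs -> aeq q (reify p) (reify (step rs p)).
Proof.
move=> hok; elim: p => [|[c w] p IH] /=; first rfl.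
case E: (rwm rs c w) => [p1|] /=.
  rewrite reify_app -IH (rwm_sound hok E); rfl.
rewrite -IH; rfl.
Qed.

Lemma normf_sound q rs n p : rules_ok q rs -> aeq q (reify p) (reify (normf rs n p)).
Proof.
move=> hok; elim: n p => [|n IH] p /=; first rfl.
rewrite -IH; exact: step_sound.
Qed.

Fixpoint coefsum (w : seq gen) (p : poly) : C :=
  match p with
  | [::] => 0
  | m :: p' => if wordeqb m.2 w then m.1 + coefsum w p' else coefsum w p'
  end.
Fixpoint filterw (w : seq gen) (p : poly) : poly :=
  match p with
  | [::] => [::]
  | m :: p' => if wordeqb m.2 w then filterw w p' else m :: filterw w p'
  end.

Lemma split_sound q w p :
  aeq q (reify p) (Add (Mul (Cst (coefsum w p)) (mono w)) (reify (filterw w p))).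
Proof.
elim: p => [|[c u] p IH] /=; first by rewrite ae_mul0 ae_add0; rfl.
case E: (wordeqb u w) => /=.
  rewrite (wordeqbP E) IH ae_addA ae_cstD ae_mulDl; rfl.
rewrite IH !ae_addA (ae_addC q (Mul (Cst c) (mono u))); rfl.
Qed.

Fixpoint zc (n : nat) (p : poly) : Prop :=
  match n with
  | 0 => p = [::]
  | n'.+1 => match p with
             | [::] => True
             | m :: p' => m.1 + coefsum m.2 p' = 0 /\ zc n' (filterw m.2 p')
             end
  end.

Lemma zc_sound q n p : zc n p -> aeq q (reify p) (Cst 0).
Proof.
elim: n p => [|n IH] [|[c w] p] //=; try rfl.
move=> [h1 h2].
rewrite (split_sound q w p) (IH _ h2) ae_addr0 -ae_mulDl -ae_cstD h1.
rewrite ae_mul0; rfl.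
Qed.

Definition ncP (rs : seq rule) (n : nat) (X Y : term) : poly :=
  normf rs n (nf (Add X (Mul (Cst (-1)) Y))).

Lemma nc_ok {q rs} n {X Y} : rules_ok q rs ->
  zc (size (ncP rs n X Y)) (ncP rs n X Y) -> aeq q X Y.
Proof.
move=> hok hz; apply: ae_sub0.
rewrite (nf_sound q (Add X (Mul (Cst (-1)) Y))) (normf_sound q rs n _ hok); exact: zc_sound hz.
Qed.

Lemma nc_cert {q rs} n c {X Y l r} : rules_ok q rs -> aeq q l r ->
  let P := ncP rs n X (Add Y (Mul (Cst c) (Add l (Mul (Cst (-1)) r)))) in
  zc (size P) P -> aeq q X Y.
Proof.
move=> hok hlr P hz.
have := nc_ok n hok hz.
rewrite hlr ae_addN ae_mulr0 ae_addr0; done.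
Qed.

Lemma rules_ok_cat q rs1 rs2 : rules_ok q rs1 -> rules_ok q rs2 -> rules_ok q (rs1 ++ rs2).
Proof.
move=> h1 h2; elim: rs1 h1 => [|r0 rs IH] h1 //= r [<-|hr]; first by apply: h1; left.
apply: (IH _ _ hr) => r' hr'; apply: h1; by right.
Qed.

Lemma rules_ok1 q r : aeq q (mono r.1) (reify r.2) -> rules_ok q [:: r].
Proof. by move=> h r' /= [<-|]. Qed.

Lemma rules_ok_cons q r rs : aeq q (mono r.1) (reify r.2) -> rules_ok q rs -> rules_ok q (r :: rs).
Proof. by move=> h hs r' /= [<-|/hs]. Qed.

Lemma rules_nil q : rules_ok q [::].
Proof. by []. Qed.

Lemma tco0 i j : tco i j 0 = Gv (GT i j 0). Proof. by []. Qed.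
Lemma tco1 i j : tco i j 1 = Cst 0. Proof. by []. Qed.
Lemma tcoN1 i j : tco i j (-1) = Gv (GT i j 1). Proof. by []. Qed.
Lemma tbco0 i j : tbco i j 0 = Gv (GTb i j 0). Proof. by []. Qed.
Lemma tbco1 i j : tbco i j 1 = Gv (GTb i j 1). Proof. by []. Qed.
Lemma tbcoN1 i j : tbco i j (-1) = Cst 0. Proof. by []. Qed.

Lemma enum_I2 : enum 'I_2 = [:: i1; i2].
Proof. by apply: (inj_map val_inj); rewrite val_enum_ord. Qed.

Lemma rule_of {q x y Z} p : aeq q (Mul (Gv x) (Gv y)) Z -> aeq q Z (reify p) ->
  aeq q (mono [:: x; y]) (reify p).
Proof. move=> h1 h2 /=; rewrite ae_mul1r h1 h2; rfl. Qed.


Definition ga := GT i1 i1 0.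
Definition gb := GT i2 i1 0.
Definition gd := GT i2 i2 0.
Definition g12 := GT i1 i2 0.
Definition gA := GTb i1 i1 0.
Definition gB := GTb i1 i2 0.
Definition gD := GTb i2 i2 0.
Definition g21 := GTb i2 i1 0.
Definition gai := GTinv i1.
Definition gDi := GTbinv i2.

Definition rules0 : seq rule := [:: ([:: g12], [::]); ([:: g21], [::])].

Lemma rules0_ok q : rules_ok q rules0.
Proof.
move=> r /= [<-|[<-|//]] /=; rewrite ae_mul1r; apply: ae_rel; constructor.
Qed.


Definition rulesDa (q : C) : seq rule := rules0 ++ [:: ([:: gD; ga], [:: ((1), [:: ga; gD])])].
Definition rulesC : seq rule := [:: ([:: ga; gai], [:: (1, [::])]);
 ([:: gai; ga], [:: (1, [::])]);
 ([:: gD; gDi], [:: (1, [::])]);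
 ([:: gDi; gD], [:: (1, [::])])].
Definition rulesB (q : C) : seq rule := [:: ([:: ga; gb], [:: ((q^-1), [:: gb; ga])]);
 ([:: gd; ga], [:: ((1), [:: ga; gd])]);
 ([:: gd; gb], [:: ((q), [:: gb; gd])]);
 ([:: gA; gB], [:: ((q^-1), [:: gB; gA])]);
 ([:: gD; gA], [:: ((1), [:: gA; gD])]);
 ([:: gD; gB], [:: ((q), [:: gB; gD])]);
 ([:: gA; ga], [:: ((1), [:: ga; gA])]);
 ([:: gA; gb], [:: ((q), [:: gb; gA])]);
 ([:: gA; gd], [:: ((1), [:: gd; gA])]);
 ([:: ga; gB], [:: ((q), [:: gB; ga])]);
 ([:: gd; gB], [:: ((q^-1), [:: gB; gd])]);
 ([:: gD; ga], [:: ((1), [:: ga; gD])]);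
 ([:: gD; gb], [:: ((q^-1), [:: gb; gD])]);
 ([:: gD; gd], [:: ((1), [:: gd; gD])]);
 ([:: gB; gb], [:: ((1), [:: gb; gB]); ((q^-1 - q), [:: ga; gD]); ((-(q^-1 - q)), [:: gd; gA])])].
Definition rulesI (q : C) : seq rule := [:: ([:: gai; gb], [:: ((q), [:: gb; gai])]);
 ([:: gai; gB], [:: ((q^-1), [:: gB; gai])]);
 ([:: gd; gai], [:: ((1), [:: gai; gd])]);
 ([:: gA; gai], [:: ((1), [:: gai; gA])]);
 ([:: gD; gai], [:: ((1), [:: gai; gD])]);
 ([:: gDi; gb], [:: ((q), [:: gb; gDi])]);
 ([:: gDi; gB], [:: ((q^-1), [:: gB; gDi])]);
 ([:: gDi; ga], [:: ((1), [:: ga; gDi])]);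
 ([:: gDi; gd], [:: ((1), [:: gd; gDi])]);
 ([:: gDi; gA], [:: ((1), [:: gA; gDi])]);
 ([:: gDi; gai], [:: ((1), [:: gai; gDi])])].
Definition rulesBC (q : C) : seq rule := rules0 ++ rulesC ++ rulesB q.
Definition rulesAll (q : C) : seq rule := rules0 ++ rulesC ++ rulesI q ++ rulesB q.
Ltac ncred := cbv beta iota zeta delta [reify mono foldr ncP normf step rwm findocc prefixb subst_m nf mulp mulm app zc coefsum filterw wordeqb geneqb oeqb Nat.eqb andb nat_of_ord i1 i2 ord0 ord_max size cat fst snd rules0 rulesDa rulesC rulesB rulesI rulesBC rulesAll s_coef sb_coef tsum iota tN tbN subn Nat.sub ga gb gd g12 gA gB gD g21 gai gDi].
Ltac ncfin := ncred; repeat (split || exact I); field; try assumption; try done.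
Ltac ncsolve n hok := apply: (nc_ok n hok); ncfin.

Lemma f_ab q (hq : q != 0) : aeq q (Mul (Gv ga) (Gv gb)) (Mul (Cst (q^-1)) (Mul (Gv gb) (Gv ga))).
Proof.
have H := ae_rel (dr_TT q i1 i1 i2 i1 1 0).
rewrite /rxy_lhs /rxy_rhs enum_I2 /= ?subrr ?sub0r ?tco0 ?tco1 ?tcoN1 ?tbco0 ?tbco1 ?tbcoN1 in H.
apply: (nc_cert 10%N (1) (rules0_ok q) H); ncfin.
Qed.

Lemma f_da q (hq : q != 0) : aeq q (Mul (Gv gd) (Gv ga)) (Mul (Cst (1)) (Mul (Gv ga) (Gv gd))).
Proof.
have H := ae_rel (dr_TT q i1 i1 i2 i2 1 0).
rewrite /rxy_lhs /rxy_rhs enum_I2 /= ?subrr ?sub0r ?tco0 ?tco1 ?tcoN1 ?tbco0 ?tbco1 ?tbcoN1 in H.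
apply: (nc_cert 10%N (-1) (rules0_ok q) H); ncfin.
Qed.

Lemma f_db q (hq : q != 0) : aeq q (Mul (Gv gd) (Gv gb)) (Mul (Cst (q)) (Mul (Gv gb) (Gv gd))).
Proof.
have H := ae_rel (dr_TT q i2 i2 i2 i1 1 0).
rewrite /rxy_lhs /rxy_rhs enum_I2 /= ?subrr ?sub0r ?tco0 ?tco1 ?tcoN1 ?tbco0 ?tbco1 ?tbcoN1 in H.
apply: (nc_cert 10%N (q) (rules0_ok q) H); ncfin.
Qed.

Lemma f_AB q (hq : q != 0) : aeq q (Mul (Gv gA) (Gv gB)) (Mul (Cst (q^-1)) (Mul (Gv gB) (Gv gA))).
Proof.
have H := ae_rel (dr_TbTb q i1 i1 i1 i2 0 1).
rewrite /rxy_lhs /rxy_rhs enum_I2 /= ?subrr ?sub0r ?tco0 ?tco1 ?tcoN1 ?tbco0 ?tbco1 ?tbcoN1 in H.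
apply: (nc_cert 10%N (- q^-1) (rules0_ok q) H); ncfin.
Qed.

Lemma f_DA q (hq : q != 0) : aeq q (Mul (Gv gD) (Gv gA)) (Mul (Cst (1)) (Mul (Gv gA) (Gv gD))).
Proof.
have H := ae_rel (dr_TbTb q i1 i1 i2 i2 0 1).
rewrite /rxy_lhs /rxy_rhs enum_I2 /= ?subrr ?sub0r ?tco0 ?tco1 ?tcoN1 ?tbco0 ?tbco1 ?tbcoN1 in H.
apply: (nc_cert 10%N (1) (rules0_ok q) H); ncfin.
Qed.

Lemma f_DB q (hq : q != 0) : aeq q (Mul (Gv gD) (Gv gB)) (Mul (Cst (q)) (Mul (Gv gB) (Gv gD))).
Proof.
have H := ae_rel (dr_TbTb q i2 i2 i1 i2 0 1).
rewrite /rxy_lhs /rxy_rhs enum_I2 /= ?subrr ?sub0r ?tco0 ?tco1 ?tcoN1 ?tbco0 ?tbco1 ?tbcoN1 in H.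
apply: (nc_cert 10%N (-1) (rules0_ok q) H); ncfin.
Qed.

Lemma f_Aa q (hq : q != 0) : aeq q (Mul (Gv gA) (Gv ga)) (Mul (Cst (1)) (Mul (Gv ga) (Gv gA))).
Proof.
have H := ae_rel (dr_TbT q i1 i1 i1 i1 0 1).
rewrite /rxy_lhs /rxy_rhs enum_I2 /= ?subrr ?sub0r ?tco0 ?tco1 ?tcoN1 ?tbco0 ?tbco1 ?tbcoN1 in H.
apply: (nc_cert 10%N (- q^-1) (rules0_ok q) H); ncfin.
Qed.

Lemma f_Ab q (hq : q != 0) : aeq q (Mul (Gv gA) (Gv gb)) (Mul (Cst (q)) (Mul (Gv gb) (Gv gA))).
Proof.
have H := ae_rel (dr_TbT q i1 i1 i2 i1 0 1).
rewrite /rxy_lhs /rxy_rhs enum_I2 /= ?subrr ?sub0r ?tco0 ?tco1 ?tcoN1 ?tbco0 ?tbco1 ?tbcoN1 in H.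
apply: (nc_cert 10%N (-1) (rules0_ok q) H); ncfin.
Qed.

Lemma f_Ad q (hq : q != 0) : aeq q (Mul (Gv gA) (Gv gd)) (Mul (Cst (1)) (Mul (Gv gd) (Gv gA))).
Proof.
have H := ae_rel (dr_TbT q i1 i1 i2 i2 0 1).
rewrite /rxy_lhs /rxy_rhs enum_I2 /= ?subrr ?sub0r ?tco0 ?tco1 ?tcoN1 ?tbco0 ?tbco1 ?tbcoN1 in H.
apply: (nc_cert 10%N (-1) (rules0_ok q) H); ncfin.
Qed.

Lemma f_aB q (hq : q != 0) : aeq q (Mul (Gv ga) (Gv gB)) (Mul (Cst (q)) (Mul (Gv gB) (Gv ga))).
Proof.
have H := ae_rel (dr_TbT q i1 i2 i1 i1 0 1).
rewrite /rxy_lhs /rxy_rhs enum_I2 /= ?subrr ?sub0r ?tco0 ?tco1 ?tcoN1 ?tbco0 ?tbco1 ?tbcoN1 in H.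
apply: (nc_cert 10%N (1) (rules0_ok q) H); ncfin.
Qed.

Lemma f_dB q (hq : q != 0) : aeq q (Mul (Gv gd) (Gv gB)) (Mul (Cst (q^-1)) (Mul (Gv gB) (Gv gd))).
Proof.
have H := ae_rel (dr_TbT q i1 i2 i2 i2 0 1).
rewrite /rxy_lhs /rxy_rhs enum_I2 /= ?subrr ?sub0r ?tco0 ?tco1 ?tcoN1 ?tbco0 ?tbco1 ?tbcoN1 in H.
apply: (nc_cert 10%N (q^-1) (rules0_ok q) H); ncfin.
Qed.

Lemma f_Da q (hq : q != 0) : aeq q (Mul (Gv gD) (Gv ga)) (Mul (Cst (1)) (Mul (Gv ga) (Gv gD))).
Proof.
have H := ae_rel (dr_TbT q i2 i2 i1 i1 0 1).
rewrite /rxy_lhs /rxy_rhs enum_I2 /= ?subrr ?sub0r ?tco0 ?tco1 ?tcoN1 ?tbco0 ?tbco1 ?tbcoN1 in H.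
apply: (nc_cert 10%N (-1) (rules0_ok q) H); ncfin.
Qed.

Lemma rulesDa_ok {q} (hq : q != 0) : rules_ok q (rulesDa q).
Proof. apply: rules_ok_cat; first exact: rules0_ok. apply: rules_ok1; apply: (rule_of _ (f_Da q hq)); ncsolve 5%N (rules_nil q). Qed.

Lemma f_Db q (hq : q != 0) : aeq q (Mul (Gv gD) (Gv gb)) (Mul (Cst (q^-1)) (Mul (Gv gb) (Gv gD))).
Proof.
have H := ae_rel (dr_TbT q i2 i2 i2 i1 0 1).
rewrite /rxy_lhs /rxy_rhs enum_I2 /= ?subrr ?sub0r ?tco0 ?tco1 ?tcoN1 ?tbco0 ?tbco1 ?tbcoN1 in H.
apply: (nc_cert 10%N (- q^-1) (rules0_ok q) H); ncfin.
Qed.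

Lemma f_Dd q (hq : q != 0) : aeq q (Mul (Gv gD) (Gv gd)) (Mul (Cst (1)) (Mul (Gv gd) (Gv gD))).
Proof.
have H := ae_rel (dr_TbT q i2 i2 i2 i2 0 1).
rewrite /rxy_lhs /rxy_rhs enum_I2 /= ?subrr ?sub0r ?tco0 ?tco1 ?tcoN1 ?tbco0 ?tbco1 ?tbcoN1 in H.
apply: (nc_cert 10%N (- q^-1) (rules0_ok q) H); ncfin.
Qed.

Lemma f_Bb q (hq : q != 0) : aeq q (Mul (Gv gB) (Gv gb)) (Add (Mul (Cst (1)) (Mul (Gv gb) (Gv gB))) (Add (Mul (Cst (q^-1 - q)) (Mul (Gv ga) (Gv gD))) (Mul (Cst (-(q^-1 - q))) (Mul (Gv gd) (Gv gA))))).
Proof.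
have H := ae_rel (dr_TbT q i1 i2 i2 i1 0 1).
rewrite /rxy_lhs /rxy_rhs enum_I2 /= ?subrr ?sub0r ?tco0 ?tco1 ?tcoN1 ?tbco0 ?tbco1 ?tbcoN1 in H.
apply: (nc_cert 10%N (-1) (rulesDa_ok hq) H); ncfin.
Qed.

Lemma f_aai q : aeq q (Mul (Gv ga) (Gv gai)) (Cst 1).
Proof. apply: ae_rel; exact: (dr_tinvr q i1). Qed.

Lemma f_aia q : aeq q (Mul (Gv gai) (Gv ga)) (Cst 1).
Proof. apply: ae_rel; exact: (dr_tinvl q i1). Qed.

Lemma f_DDi q : aeq q (Mul (Gv gD) (Gv gDi)) (Cst 1).
Proof. apply: ae_rel; exact: (dr_tbinvr q i2). Qed.

Lemma f_DiD q : aeq q (Mul (Gv gDi) (Gv gD)) (Cst 1).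
Proof. apply: ae_rel; exact: (dr_tbinvl q i2). Qed.

Lemma rulesC_ok q : rules_ok q rulesC.
Proof.
apply: rules_ok_cons; first by apply: (rule_of _ (f_aai q)); ncsolve 5%N (rules_nil q).
apply: rules_ok_cons; first by apply: (rule_of _ (f_aia q)); ncsolve 5%N (rules_nil q).
apply: rules_ok_cons; first by apply: (rule_of _ (f_DDi q)); ncsolve 5%N (rules_nil q).
apply: rules_ok_cons; first by apply: (rule_of _ (f_DiD q)); ncsolve 5%N (rules_nil q).
exact: rules_nil.
Qed.
Lemma rulesB_ok {q} (hq : q != 0) : rules_ok q (rulesB q).
Proof.
apply: rules_ok_cons; first by apply: (rule_of _ (f_ab q hq)); ncsolve 5%N (rules_nil q).
apply: rules_ok_cons; first by apply: (rule_of _ (f_da q hq)); ncsolve 5%N (rules_nil q).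
apply: rules_ok_cons; first by apply: (rule_of _ (f_db q hq)); ncsolve 5%N (rules_nil q).
apply: rules_ok_cons; first by apply: (rule_of _ (f_AB q hq)); ncsolve 5%N (rules_nil q).
apply: rules_ok_cons; first by apply: (rule_of _ (f_DA q hq)); ncsolve 5%N (rules_nil q).
apply: rules_ok_cons; first by apply: (rule_of _ (f_DB q hq)); ncsolve 5%N (rules_nil q).
apply: rules_ok_cons; first by apply: (rule_of _ (f_Aa q hq)); ncsolve 5%N (rules_nil q).
apply: rules_ok_cons; first by apply: (rule_of _ (f_Ab q hq)); ncsolve 5%N (rules_nil q).
apply: rules_ok_cons; first by apply: (rule_of _ (f_Ad q hq)); ncsolve 5%N (rules_nil q).
apply: rules_ok_cons; first by apply: (rule_of _ (f_aB q hq)); ncsolve 5%N (rules_nil q).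
apply: rules_ok_cons; first by apply: (rule_of _ (f_dB q hq)); ncsolve 5%N (rules_nil q).
apply: rules_ok_cons; first by apply: (rule_of _ (f_Da q hq)); ncsolve 5%N (rules_nil q).
apply: rules_ok_cons; first by apply: (rule_of _ (f_Db q hq)); ncsolve 5%N (rules_nil q).
apply: rules_ok_cons; first by apply: (rule_of _ (f_Dd q hq)); ncsolve 5%N (rules_nil q).
apply: rules_ok_cons; first by apply: (rule_of _ (f_Bb q hq)); ncsolve 5%N (rules_nil q).
exact: rules_nil.
Qed.
Lemma rulesBC_ok {q} (hq : q != 0) : rules_ok q (rulesBC q).
Proof. apply: rules_ok_cat; first exact: rules0_ok. apply: rules_ok_cat; [exact: rulesC_ok | exact: rulesB_ok]. Qed.

Lemma f_aib q (hq : q != 0) : aeq q (Mul (Gv gai) (Gv gb)) (Mul (Cst (q)) (Mul (Gv gb) (Gv gai))).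
Proof.
have H : aeq q (Mul (Gv gai) (Mul (Mul (Gv ga) (Gv gb)) (Gv gai))) (Mul (Gv gai) (Mul (Mul (Cst (q^-1)) (Mul (Gv gb) (Gv ga))) (Gv gai))).
  rewrite (f_ab q hq); rfl.
apply: (nc_cert 12%N (-q) (rulesBC_ok hq) H); ncfin.
Qed.

Lemma f_aiB q (hq : q != 0) : aeq q (Mul (Gv gai) (Gv gB)) (Mul (Cst (q^-1)) (Mul (Gv gB) (Gv gai))).
Proof.
have H : aeq q (Mul (Gv gai) (Mul (Mul (Gv ga) (Gv gB)) (Gv gai))) (Mul (Gv gai) (Mul (Mul (Cst (q)) (Mul (Gv gB) (Gv ga))) (Gv gai))).
  rewrite (f_aB q hq); rfl.
apply: (nc_cert 12%N (- q^-1) (rulesBC_ok hq) H); ncfin.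
Qed.

Lemma f_dai q (hq : q != 0) : aeq q (Mul (Gv gd) (Gv gai)) (Mul (Cst (1)) (Mul (Gv gai) (Gv gd))).
Proof.
have H : aeq q (Mul (Gv gai) (Mul (Mul (Gv gd) (Gv ga)) (Gv gai))) (Mul (Gv gai) (Mul (Mul (Cst (1)) (Mul (Gv ga) (Gv gd))) (Gv gai))).
  rewrite (f_da q hq); rfl.
apply: (nc_cert 12%N (-1) (rulesBC_ok hq) H); ncfin.
Qed.

Lemma f_Aai q (hq : q != 0) : aeq q (Mul (Gv gA) (Gv gai)) (Mul (Cst (1)) (Mul (Gv gai) (Gv gA))).
Proof.
have H : aeq q (Mul (Gv gai) (Mul (Mul (Gv gA) (Gv ga)) (Gv gai))) (Mul (Gv gai) (Mul (Mul (Cst (1)) (Mul (Gv ga) (Gv gA))) (Gv gai))).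
  rewrite (f_Aa q hq); rfl.
apply: (nc_cert 12%N (-1) (rulesBC_ok hq) H); ncfin.
Qed.

Lemma f_Dai q (hq : q != 0) : aeq q (Mul (Gv gD) (Gv gai)) (Mul (Cst (1)) (Mul (Gv gai) (Gv gD))).
Proof.
have H : aeq q (Mul (Gv gai) (Mul (Mul (Gv gD) (Gv ga)) (Gv gai))) (Mul (Gv gai) (Mul (Mul (Cst (1)) (Mul (Gv ga) (Gv gD))) (Gv gai))).
  rewrite (f_Da q hq); rfl.
apply: (nc_cert 12%N (-1) (rulesBC_ok hq) H); ncfin.
Qed.

Lemma f_Dib q (hq : q != 0) : aeq q (Mul (Gv gDi) (Gv gb)) (Mul (Cst (q)) (Mul (Gv gb) (Gv gDi))).
Proof.
have H : aeq q (Mul (Gv gDi) (Mul (Mul (Gv gD) (Gv gb)) (Gv gDi))) (Mul (Gv gDi) (Mul (Mul (Cst (q^-1)) (Mul (Gv gb) (Gv gD))) (Gv gDi))).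
  rewrite (f_Db q hq); rfl.
apply: (nc_cert 12%N (-q) (rulesBC_ok hq) H); ncfin.
Qed.

Lemma f_DiB q (hq : q != 0) : aeq q (Mul (Gv gDi) (Gv gB)) (Mul (Cst (q^-1)) (Mul (Gv gB) (Gv gDi))).
Proof.
have H : aeq q (Mul (Gv gDi) (Mul (Mul (Gv gD) (Gv gB)) (Gv gDi))) (Mul (Gv gDi) (Mul (Mul (Cst (q)) (Mul (Gv gB) (Gv gD))) (Gv gDi))).
  rewrite (f_DB q hq); rfl.
apply: (nc_cert 12%N (- q^-1) (rulesBC_ok hq) H); ncfin.
Qed.

Lemma f_Dia q (hq : q != 0) : aeq q (Mul (Gv gDi) (Gv ga)) (Mul (Cst (1)) (Mul (Gv ga) (Gv gDi))).
Proof.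
have H : aeq q (Mul (Gv gDi) (Mul (Mul (Gv gD) (Gv ga)) (Gv gDi))) (Mul (Gv gDi) (Mul (Mul (Cst (1)) (Mul (Gv ga) (Gv gD))) (Gv gDi))).
  rewrite (f_Da q hq); rfl.
apply: (nc_cert 12%N (-1) (rulesBC_ok hq) H); ncfin.
Qed.

Lemma f_Did q (hq : q != 0) : aeq q (Mul (Gv gDi) (Gv gd)) (Mul (Cst (1)) (Mul (Gv gd) (Gv gDi))).
Proof.
have H : aeq q (Mul (Gv gDi) (Mul (Mul (Gv gD) (Gv gd)) (Gv gDi))) (Mul (Gv gDi) (Mul (Mul (Cst (1)) (Mul (Gv gd) (Gv gD))) (Gv gDi))).
  rewrite (f_Dd q hq); rfl.
apply: (nc_cert 12%N (-1) (rulesBC_ok hq) H); ncfin.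
Qed.

Lemma f_DiA q (hq : q != 0) : aeq q (Mul (Gv gDi) (Gv gA)) (Mul (Cst (1)) (Mul (Gv gA) (Gv gDi))).
Proof.
have H : aeq q (Mul (Gv gDi) (Mul (Mul (Gv gD) (Gv gA)) (Gv gDi))) (Mul (Gv gDi) (Mul (Mul (Cst (1)) (Mul (Gv gA) (Gv gD))) (Gv gDi))).
  rewrite (f_DA q hq); rfl.
apply: (nc_cert 12%N (-1) (rulesBC_ok hq) H); ncfin.
Qed.

Lemma f_Diai q (hq : q != 0) : aeq q (Mul (Gv gDi) (Gv gai)) (Mul (Cst (1)) (Mul (Gv gai) (Gv gDi))).
Proof.
have H : aeq q (Mul (Gv gDi) (Mul (Mul (Gv gD) (Gv gai)) (Gv gDi))) (Mul (Gv gDi) (Mul (Mul (Cst (1)) (Mul (Gv gai) (Gv gD))) (Gv gDi))).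
  rewrite (f_Dai q hq); rfl.
apply: (nc_cert 12%N (-1) (rulesBC_ok hq) H); ncfin.
Qed.
Lemma rulesI_ok {q} (hq : q != 0) : rules_ok q (rulesI q).
Proof.
apply: rules_ok_cons; first by apply: (rule_of _ (f_aib q hq)); ncsolve 5%N (rules_nil q).
apply: rules_ok_cons; first by apply: (rule_of _ (f_aiB q hq)); ncsolve 5%N (rules_nil q).
apply: rules_ok_cons; first by apply: (rule_of _ (f_dai q hq)); ncsolve 5%N (rules_nil q).
apply: rules_ok_cons; first by apply: (rule_of _ (f_Aai q hq)); ncsolve 5%N (rules_nil q).
apply: rules_ok_cons; first by apply: (rule_of _ (f_Dai q hq)); ncsolve 5%N (rules_nil q).
apply: rules_ok_cons; first by apply: (rule_of _ (f_Dib q hq)); ncsolve 5%N (rules_nil q).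
apply: rules_ok_cons; first by apply: (rule_of _ (f_DiB q hq)); ncsolve 5%N (rules_nil q).
apply: rules_ok_cons; first by apply: (rule_of _ (f_Dia q hq)); ncsolve 5%N (rules_nil q).
apply: rules_ok_cons; first by apply: (rule_of _ (f_Did q hq)); ncsolve 5%N (rules_nil q).
apply: rules_ok_cons; first by apply: (rule_of _ (f_DiA q hq)); ncsolve 5%N (rules_nil q).
apply: rules_ok_cons; first by apply: (rule_of _ (f_Diai q hq)); ncsolve 5%N (rules_nil q).
exact: rules_nil.
Qed.
Lemma rulesAll_ok {q} (hq : q != 0) : rules_ok q (rulesAll q).
Proof. apply: rules_ok_cat; first exact: rules0_ok. apply: rules_ok_cat; first exact: rulesC_ok. apply: rules_ok_cat; [exact: rulesI_ok | exact: rulesB_ok]. Qed.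


Definition Xi (q : C) := Mul (Cst q^-1) (Mul (Gv gDi) (Gv gai)).
Definition S (q : C) i j := s_coef q i j 0.
Definition ee (q : C) := Mul (Xi q) (S q i1 i1).
Definition ff (q : C) := Mul (Xi q) (S q i2 i2).
Definition HH (q : C) := Mul (Cst q) (Add (Mul (ff q) (ee q)) (Mul (Cst (-1)) (Mul (Xi q) (S q i2 i1)))).

Ltac ncred2 := cbv beta iota zeta delta [Xi S ee ff HH reify mono foldr ncP normf step rwm findocc prefixb subst_m nf mulp mulm app zc coefsum filterw wordeqb geneqb oeqb Nat.eqb andb nat_of_ord i1 i2 ord0 ord_max size cat fst snd rules0 rulesC rulesB rulesI rulesAll s_coef sb_coef tsum iota tN tbN subn Nat.sub ga gb gd g12 gA gB gD g21 gai gDi].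
Ltac ncs2 n hok := apply: (nc_ok n hok); ncred2; repeat (split || exact I); field; try assumption; try done.

Lemma K1 q (hq : q != 0) : aeq q (Mul (Xi q) (S q i1 i2)) (Cst 1).
Proof. ncs2 40%N (rulesAll_ok hq). Qed.
Lemma K2 q (hq : q != 0) : aeq q (Mul (S q i1 i2) (Xi q)) (Cst 1).
Proof. ncs2 40%N (rulesAll_ok hq). Qed.
Lemma F3 q (hq : q != 0) : aeq q (Mul (Mul (Cst (- q)) (Xi q)) (sb_coef q i2 i1 0)) (Cst 1).
Proof. ncs2 40%N (rulesAll_ok hq). Qed.
Lemma F2 q (hq : q != 0) : aeq q (Mul (HH q) (ff q)) (Mul (Cst (q^+4)) (Mul (ff q) (HH q))).
Proof. ncs2 60%N (rulesAll_ok hq). Qed.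
Lemma F1 q (hq : q != 0) : aeq q (Mul (ee q) (ff q))
  (Add (Mul (Cst (q^+2)) (Mul (ff q) (ee q))) (Mul (Cst (q - q^+3)) (Add (Cst 1) (Mul (Cst (-1)) (HH q))))).
Proof. ncs2 60%N (rulesAll_ok hq). Qed.


Notation m1 := (Cst (-1)).

Lemma ae_addNl q y : aeq q (Add (Mul m1 y) y) (Cst 0).
Proof. rewrite ae_addC ae_addN; rfl. Qed.

Lemma ae_sub_trans q x y z :
  aeq q (Add (Add x (Mul m1 y)) (Add y (Mul m1 z))) (Add x (Mul m1 z)).
Proof.
rewrite -(ae_addA q x (Mul m1 y) (Add y (Mul m1 z))).
rewrite (ae_addA q (Mul m1 y) y (Mul m1 z)) ae_addNl ae_add0; rfl.
Qed.

Lemma ae_sub_mul q w x y :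
  aeq q (Mul w (Add x (Mul m1 y))) (Add (Mul w x) (Mul m1 (Mul w y))).
Proof. rewrite ae_mulDr ae_pullR; rfl. Qed.

Lemma ae_add4 q a b c d :
  aeq q (Add (Add a b) (Add c d)) (Add (Add a c) (Add b d)).
Proof.
rewrite -(ae_addA q a b (Add c d)) (ae_addA q b c d) (ae_addC q b c).
rewrite -(ae_addA q c b d) (ae_addA q a c (Add b d)); rfl.
Qed.

Lemma ae_sub_add q x1 y1 x2 y2 :
  aeq q (Add (Add x1 (Mul m1 y1)) (Add x2 (Mul m1 y2)))
        (Add (Add x1 x2) (Mul m1 (Add y1 y2))).
Proof. rewrite ae_add4 (ae_mulDr q m1 y1 y2); rfl. Qed.

Lemma ae_m1m1 q y : aeq q (Mul m1 (Mul m1 y)) y.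
Proof. rewrite ae_cstM2 mulrNN mulr1 ae_mul1l; rfl. Qed.

Lemma ae_sub_sym q x y : aeq q (Mul m1 (Add x (Mul m1 y))) (Add y (Mul m1 x)).
Proof. rewrite ae_mulDr ae_m1m1 ae_addC; rfl. Qed.

Lemma ae_sub0r q x : aeq q (Add x (Mul m1 (Cst 0))) x.
Proof. rewrite ae_mulr0 ae_addr0; rfl. Qed.

Lemma ae_subK q x y : aeq q (Add (Add x (Mul m1 y)) y) x.
Proof. rewrite -ae_addA ae_addNl ae_addr0; rfl. Qed.

Notation eqL q L x y := (L (Add x (Mul m1 y))) (only parsing).

Lemma L_aeq {q L} : is_lideal q L -> forall x y, aeq q x y -> L x -> L y.
Proof. by case. Qed.
Lemma L_add {q L} : is_lideal q L -> forall x y, L x -> L y -> L (Add x y).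
Proof. by case. Qed.
Lemma L_mul {q L} : is_lideal q L -> forall y x, inY q y -> L x -> L (Mul y x).
Proof. by case. Qed.
Lemma L_0 {q L} : is_lideal q L -> L (Cst 0).
Proof. by case. Qed.
Lemma L_cst {q L} : is_lideal q L -> forall c x, L x -> L (Mul (Cst c) x).
Proof. move=> hL c x; apply: (L_mul hL); exact: Y_cst. Qed.

Lemma eqL_refl {q L} : is_lideal q L -> forall x, eqL q L x x.
Proof. move=> hL x; apply: (L_aeq hL) (L_0 hL); rewrite ae_addN; rfl. Qed.

Lemma eqL_aeq {q L} : is_lideal q L -> forall x x' y y',
  aeq q x x' -> aeq q y y' -> eqL q L x y -> eqL q L x' y'.
Proof. move=> hL x x' y y' h1 h2; apply: (L_aeq hL); rewrite h1 h2; rfl. Qed.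

Lemma eqL_of_aeq {q L} : is_lideal q L -> forall x y, aeq q x y -> eqL q L x y.
Proof. move=> hL x y h; apply: (eqL_aeq hL x x x y) (eqL_refl hL x) => //; rfl. Qed.

Lemma eqL_trans {q L} : is_lideal q L -> forall x y z,
  eqL q L x y -> eqL q L y z -> eqL q L x z.
Proof.
move=> hL x y z h1 h2; apply: (L_aeq hL _ _ _ (L_add hL _ _ h1 h2)); exact: ae_sub_trans.
Qed.

Lemma eqL_sym {q L} : is_lideal q L -> forall x y, eqL q L x y -> eqL q L y x.
Proof. move=> hL x y h; apply: (L_aeq hL _ _ _ (L_cst hL (-1) _ h)); exact: ae_sub_sym. Qed.

Lemma eqL_mul {q L} : is_lideal q L -> forall w x y, inY q w ->
  eqL q L x y -> eqL q L (Mul w x) (Mul w y).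
Proof. move=> hL w x y hw h; apply: (L_aeq hL _ _ _ (L_mul hL _ _ hw h)); exact: ae_sub_mul. Qed.

Lemma eqL_cst {q L} : is_lideal q L -> forall c x y,
  eqL q L x y -> eqL q L (Mul (Cst c) x) (Mul (Cst c) y).
Proof. move=> hL c x y; apply: (eqL_mul hL); exact: Y_cst. Qed.

Lemma eqL_add {q L} : is_lideal q L -> forall x1 y1 x2 y2,
  eqL q L x1 y1 -> eqL q L x2 y2 -> eqL q L (Add x1 x2) (Add y1 y2).
Proof. move=> hL x1 y1 x2 y2 h1 h2; apply: (L_aeq hL _ _ _ (L_add hL _ _ h1 h2)); exact: ae_sub_add. Qed.

Lemma eqL_L {q L} : is_lideal q L -> forall x, L x -> eqL q L x (Cst 0).
Proof. move=> hL x h; apply: (L_aeq hL _ _ _ h); rewrite ae_sub0r; rfl. Qed.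

Lemma L_eqL {q L} : is_lideal q L -> forall x y, eqL q L x y -> L y -> L x.
Proof. move=> hL x y h1 h2; apply: (L_aeq hL _ _ _ (L_add hL _ _ h1 h2)); exact: ae_subK. Qed.

Lemma inY_Xi {q} (hq : q != 0) : inY q (Xi q).
Proof. exact: (Y_sinv (K1 q hq) (K2 q hq)). Qed.
Lemma inY_S q i j : inY q (S q i j).
Proof. exact: Y_s. Qed.
Lemma inY_ee {q} (hq : q != 0) : inY q (ee q).
Proof. apply: Y_mul; [exact: inY_Xi | exact: inY_S]. Qed.
Lemma inY_ff {q} (hq : q != 0) : inY q (ff q).
Proof. apply: Y_mul; [exact: inY_Xi | exact: inY_S]. Qed.

Definition fpow (q : C) (k : nat) : term := iter k (Mul (ff q)) (Cst 1).
Definition ap (q : C) (j : nat) (x : term) : term := iter j (Mul (ee q)) x.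
Definition cc (q : C) (k : nat) : C := iter k (fun c => q ^+ 2 * c + (q - q ^+ 3)) 0.
Fixpoint dd (q : C) (j k : nat) : C :=
  match j with 0 => 1 | j'.+1 => dd q j' k * cc q (k - j') end.

Lemma HL_pow {q L} (hq : q != 0) : is_lideal q L -> L (HH q) ->
  forall k, L (Mul (HH q) (fpow q k)).
Proof.
move=> hL hH; elim=> [|k IH] /=.
  apply: (L_aeq hL _ _ _ hH); rewrite ae_mul1r; rfl.
apply: (L_aeq hL _ _ _ (L_cst hL (q ^+ 4) _ (L_mul hL _ _ (inY_ff hq) IH))).
symmetry; rewrite ae_mulA (F2 q hq) ae_pullL -ae_mulA; rfl.
Qed.

Lemma F1P q (hq : q != 0) P : aeq q (Mul (ee q) (Mul (ff q) P))
  (Add (Mul (Cst (q ^+ 2)) (Mul (ff q) (Mul (ee q) P)))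
       (Add (Mul (Cst (q - q ^+ 3)) P) (Mul (Cst (- (q - q ^+ 3))) (Mul (HH q) P)))).
Proof.
rewrite ae_mulA (F1 q hq) ae_mulDl ae_pullL ae_pullL -ae_mulA.
apply: ae_add; first rfl.
rewrite ae_mulDl ae_mul1l ae_pullL ae_mulDr ae_cstM2 mulrN1; rfl.
Qed.

Lemma Astep {q L} (hq : q != 0) : is_lideal q L -> L (HH q) -> L (ee q) ->
  forall k, eqL q L (Mul (ee q) (fpow q k)) (Mul (Cst (cc q k)) (fpow q k.-1)).
Proof.
move=> hL hH he; elim=> [|k IH].
  apply: (eqL_aeq hL (ee q) _ (Cst 0)); [rewrite /fpow /= ae_mul1r; rfl | rewrite /cc /= ae_mul0; rfl |].
  exact: (eqL_L hL _ he).
rewrite /= -/(fpow q k).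
apply: (eqL_aeq hL (Add (Mul (Cst (q ^+ 2)) (Mul (ff q) (Mul (ee q) (fpow q k))))
       (Add (Mul (Cst (q - q ^+ 3)) (fpow q k)) (Mul (Cst (- (q - q ^+ 3))) (Mul (HH q) (fpow q k)))))
   _ (Add (Mul (Cst (q ^+ 2)) (Mul (Cst (cc q k)) (fpow q k)))
   (Add (Mul (Cst (q - q ^+ 3)) (fpow q k)) (Cst 0)))); first by symmetry; exact: F1P.
  rewrite ae_addr0 ae_cstM2 -ae_mulDl -ae_cstD; rfl.
apply: (eqL_add hL); last apply: (eqL_add hL).
- apply: (eqL_cst hL).
  apply: (eqL_aeq hL _ _ (Mul (ff q) (Mul (Cst (cc q k)) (fpow q k.-1)))); [rfl| |].
    rewrite ae_pullR; case: k {IH} => [|k] /=; last rfl.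
    rewrite ae_mul0 ae_mul0; rfl.
  apply: (eqL_mul hL) => //; exact: inY_ff.
- exact: (eqL_refl hL _).
- apply: (eqL_L hL); apply: (L_cst hL); exact: (HL_pow hq hL hH).
Qed.

Lemma Dgen {q L} (hq : q != 0) : is_lideal q L -> L (HH q) -> L (ee q) ->
  forall j k, eqL q L (ap q j (fpow q k)) (Mul (Cst (dd q j k)) (fpow q (k - j))).
Proof.
move=> hL hH he; elim=> [|j IH] k /=.
  apply: (eqL_of_aeq hL); rewrite subn0 ae_mul1l; rfl.
apply: (eqL_trans hL _ (Mul (ee q) (Mul (Cst (dd q j k)) (fpow q (k - j))))).
  apply: (eqL_mul hL); [exact: inY_ee | exact: IH].
apply: (eqL_aeq hL (Mul (Cst (dd q j k)) (Mul (ee q) (fpow q (k - j))))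
  _ (Mul (Cst (dd q j k)) (Mul (Cst (cc q (k - j))) (fpow q (k - j).-1)))).
- rewrite ae_pullR; rfl.
- rewrite ae_cstM2 subnS; rfl.
apply: (eqL_cst hL); exact: Astep.
Qed.

Lemma cc_closed q k : cc q k * (1 - q ^+ 2) = (q - q ^+ 3) * (1 - q ^+ (2 * k)).
Proof.
elim: k => [|k IH] /=; first by rewrite muln0 expr0 subrr !mulr0 mul0r.
rewrite -/(cc q k) mulrDl -mulrA IH mulnS exprD; ring.
Qed.

Lemma cc_neq0 q (hq0 : q != 0) (hq : forall n : nat, (0 < n)%N -> q ^+ n != 1) k :
  (0 < k)%N -> cc q k != 0.
Proof.
move=> hk; apply/eqP => h.
have := cc_closed q k; rewrite h mul0r => /esym/eqP.
rewrite mulf_eq0 => /orP[].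
  have -> : q - q ^+ 3 = q * (1 - q ^+ 2) by ring.
  rewrite mulf_eq0 (negbTE hq0) /= subr_eq0 eq_sym.
  by apply/negP; apply: hq.
rewrite subr_eq0 eq_sym; apply/negP; apply: hq; by rewrite muln_gt0.
Qed.

Lemma dd_neq0 q (hq0 : q != 0) (hq : forall n : nat, (0 < n)%N -> q ^+ n != 1) j k :
  (j <= k)%N -> dd q j k != 0.
Proof.
elim: j => [|j IH] hjk /=; first exact: oner_neq0.
rewrite mulf_neq0 //; first by apply: IH; exact: ltnW.
apply: cc_neq0 => //; by rewrite subn_gt0.
Qed.

Lemma dd_eq0 q j k : (k < j)%N -> dd q j k = 0.
Proof.
elim: j => [|j IH] //= hkj.
case: (ltnP k j) => h; first by rewrite IH // mul0r.
have -> : k = j by apply/eqP; rewrite eqn_leq h -ltnS hkj.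
by rewrite subnn /= mulr0.
Qed.


Lemma tsum_congr q (A : Type) (s : seq A) F G :
  (forall k, aeq q (F k) (G k)) -> aeq q (tsum s F) (tsum s G).
Proof. move=> h; elim: s => [|a s IH] /=; first rfl. rewrite h IH; rfl. Qed.

Lemma mul_tsum q (A : Type) (s : seq A) w F :
  aeq q (Mul w (tsum s F)) (tsum s (fun k => Mul w (F k))).
Proof.
elim: s => [|a s IH] /=; first by rewrite ae_mulr0; rfl.
rewrite ae_mulDr IH; rfl.
Qed.

Lemma tsum_zero q (A : eqType) (s : seq A) F :
  (forall k, k \in s -> aeq q (F k) (Cst 0)) -> aeq q (tsum s F) (Cst 0).
Proof.
elim: s => [|a s IH] h /=; first rfl.
rewrite (h a (mem_head _ _)) IH ?ae_add0; first rfl.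
by move=> k hk; apply: h; rewrite in_cons hk orbT.
Qed.

Lemma tsum_cst q (A : Type) (s : seq A) (g : A -> C) :
  aeq q (tsum s (fun k => Mul (Cst (g k)) (Cst 1))) (Cst (\sum_(k <- s) g k)).
Proof.
elim: s => [|a s IH] /=; first by rewrite big_nil; rfl.
rewrite big_cons IH ae_mul1r ae_cstD; rfl.
Qed.

Lemma eqL_tsum {q L} : is_lideal q L -> forall (A : eqType) (s : seq A) F G,
  (forall k, k \in s -> eqL q L (F k) (G k)) -> eqL q L (tsum s F) (tsum s G).
Proof.
move=> hL A; elim=> [|a s IH] F G h /=; first exact: (eqL_refl hL _).
apply: (eqL_add hL); first by apply: h; exact: mem_head.
apply: IH => k hk; apply: h; by rewrite in_cons hk orbT.
Qed.

Lemma tsum_shift (s : nat -> term) m n :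
  tsum (iota m.+1 n) s = tsum (iota m n) (fun j => s j.+1).
Proof. by elim: n m => //= n IH m; rewrite IH. Qed.

Lemma tzip q (bs : seq term) (cs : seq C) :
  aeq q (tsum (zip cs bs) (fun p => Mul (Cst p.1) p.2))
        (tsum (iota 0 (size bs)) (fun j => Mul (Cst (nth 0 cs j)) (nth (Cst 0) bs j))).
Proof.
elim: bs cs => [|b bs IH] [|c cs]; try rfl.
  symmetry; apply: tsum_zero => k _; rewrite nth_nil ae_mul0; rfl.
rewrite [iota _ _]/= [zip _ _]/= /tsum /= -!/(tsum _ _) tsum_shift IH; rfl.
Qed.

Definition lincomb (bs : seq term) (s : seq nat) (r : nat -> C) : term :=
  tsum s (fun j => Mul (Cst (r j)) (nth (Cst 0) bs j)).

Lemma lin_ext bs s r t : (forall j, r j = t j) -> lincomb bs s r = lincomb bs s t.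
Proof. by move=> h; elim: s => //= j s IH; rewrite h IH. Qed.

Lemma lin_add q bs s r t : aeq q (Add (lincomb bs s r) (lincomb bs s t))
  (lincomb bs s (fun j => r j + t j)).
Proof.
elim: s => [|j s IH] /=; first by rewrite ae_add0; rfl.
rewrite ae_add4 IH ae_cstD ae_mulDl; rfl.
Qed.

Lemma lin_scale q bs s c r : aeq q (Mul (Cst c) (lincomb bs s r))
  (lincomb bs s (fun j => c * r j)).
Proof.
elim: s => [|j s IH] /=; first by rewrite ae_mulr0; rfl.
rewrite ae_mulDr IH ae_cstM2; rfl.
Qed.

Lemma lin_zero q bs s r : (forall j, j \in s -> r j = 0) -> aeq q (lincomb bs s r) (Cst 0).
Proof. move=> h; apply: tsum_zero => k hk; rewrite h // ae_mul0; rfl. Qed.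


Lemma lin_dep (N : nat) (c : nat -> nat -> C) :
  exists lam : nat -> C, (exists k, (k < N.+1)%N /\ lam k != 0) /\
    forall j, (j < N)%N -> \sum_(k <- iota 0 N.+1) lam k * c k j = 0.
Proof.
pose M : 'M[C]_(N.+1, N) := \matrix_(k < N.+1, j < N) c k j.
have hnf : ~~ row_free M.
  rewrite /row_free; apply/negP => /eqP h.
  by have := rank_leq_col M; rewrite h ltnn.
have : kermx M != 0 by rewrite kermx_eq0.
case/matrix0Pn => i [j hij].
pose lam := fun k : nat => kermx M i (inord k).
exists lam; split.
  by exists j; split => //; rewrite /lam inord_val.
move=> j' hj'.
have h0 : row i (kermx M) *m M = 0 by rewrite -row_mul mulmx_ker row0.
have := congr1 (fun A : 'rV_N => A 0 (Ordinal hj')) h0.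
rewrite !mxE => hs; rewrite -[RHS]hs.
have -> : \sum_(k <- iota 0 N.+1) lam k * c k j' = \sum_(k < N.+1) lam k * c k j'.
  by rewrite -(big_mkord xpredT (fun k => lam k * c k j')) /index_iota subn0.
apply: eq_bigr => k _; by rewrite /lam inord_val [row _ _ _ _]mxE [M _ _]mxE.
Qed.

Lemma inY_fpow {q} (hq : q != 0) k : inY q (fpow q k).
Proof. elim: k => [|k IH] /=; [exact: Y_cst | apply: Y_mul => //; exact: inY_ff]. Qed.

Lemma ap_L {q L} (hq : q != 0) : is_lideal q L -> forall j x, L x -> L (ap q j x).
Proof. move=> hL; elim=> [|j IH] x hx //=; apply: (L_mul hL); [exact: inY_ee | exact: IH]. Qed.

Lemma ap_tsum q j (s : seq nat) (g : nat -> C) (t : nat -> term) :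
  aeq q (ap q j (tsum s (fun k => Mul (Cst (g k)) (t k))))
        (tsum s (fun k => Mul (Cst (g k)) (ap q j (t k)))).
Proof.
elim: j => [|j IH] /=; first rfl.
rewrite IH mul_tsum; apply: tsum_congr => k; rewrite ae_pullR; rfl.
Qed.

Lemma mu_part q (hq0 : q != 0) (hq : forall n : nat, (0 < n)%N -> q ^+ n != 1)
  L (hL : is_lideal q L) (hnot1 : ~ L (Cst 1)) (hH : L (HH q)) (he : L (ee q))
  (bs : seq term)
  (hspan : forall y, inY q y -> exists cs : seq C,
      L (Add y (Mul (Cst (-1)) (tsum (zip cs bs) (fun p => Mul (Cst p.1) p.2))))) :
  False.
Proof.
pose N := size bs.
pose csf k := proj1_sig (constructive_indefinite_description _ (hspan _ (inY_fpow hq0 k))).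
have hP : forall k, L (Add (fpow q k) (Mul m1 (lincomb bs (iota 0 N) (fun j => nth 0 (csf k) j)))).
  move=> k; have := proj2_sig (constructive_indefinite_description _ (hspan _ (inY_fpow hq0 k))).
  rewrite -/(csf k) => h; apply: (L_aeq hL _ _ _ h); rewrite tzip; rfl.
have [lam [[k0 [hk0 hl0]] hsum]] := lin_dep N (fun k j => nth 0 (csf k) j).
have hZc : forall s, L (Add (tsum s (fun k => Mul (Cst (lam k)) (fpow q k)))
    (Mul m1 (lincomb bs (iota 0 N) (fun j => \sum_(k <- s) lam k * nth 0 (csf k) j)))).
  elim=> [|k s IH].
    apply: (L_aeq hL _ _ _ (L_0 hL)); rewrite lin_zero; last by move=> j _; rewrite big_nil.
    rewrite ae_mulr0 /= ae_add0; rfl.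
  apply: (L_aeq hL _ _ _ (L_add hL _ _ (L_cst hL (lam k) _ (hP k)) IH)).
  rewrite ae_sub_mul ae_sub_add lin_scale lin_add.
  have -> : lincomb bs (iota 0 N) (fun j => \sum_(k' <- k :: s) lam k' * nth 0 (csf k') j) =
    lincomb bs (iota 0 N) (fun j => lam k * nth 0 (csf k) j + \sum_(k' <- s) lam k' * nth 0 (csf k') j).
    by apply: lin_ext => j; rewrite big_cons.
  rfl.
pose Z := tsum (iota 0 N.+1) (fun k => Mul (Cst (lam k)) (fpow q k)).
have hZ : L Z.
  apply: (L_aeq hL _ _ _ (hZc (iota 0 N.+1))).
  rewrite lin_zero; first by rewrite ae_sub0r; rfl.
  move=> j; rewrite mem_iota add0n => hj; exact: hsum.
have exP : exists n, (n < N.+1)%N && (lam n != 0) by exists k0; rewrite hk0 hl0.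
have ubP : forall n, (n < N.+1)%N && (lam n != 0) -> (n <= N)%N by move=> n /andP[].
case: (ex_maxnP exP ubP) => K /andP[hK hlK] hmax.
pose a := lam K * dd q K K.
have ha : a != 0 by rewrite mulf_neq0 // dd_neq0.
have h1 : eqL q L (ap q K Z) (Cst a).
  apply: (eqL_aeq hL (tsum (iota 0 N.+1) (fun k => Mul (Cst (lam k)) (ap q K (fpow q k)))) _
     (tsum (iota 0 N.+1) (fun k => Mul (Cst (if k == K then a else 0)) (Cst 1)))).
  - symmetry; exact: ap_tsum.
  - rewrite tsum_cst (bigD1_seq K) ?mem_iota ?iota_uniq //= big1 ?addr0 ?eqxx; first rfl.
    by move=> i /negbTE ->.
  apply: (eqL_tsum hL) => k hk.
  apply: (eqL_trans hL _ _ _ (eqL_cst hL (lam k) _ _ (Dgen hq0 hL hH he K k))).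
  apply: (eqL_of_aeq hL); rewrite ae_cstM2.
  case: (ltngtP k K) => hkK.
  - rewrite dd_eq0 // mulr0 ae_mul0 ae_mul0; rfl.
  - have -> : lam k = 0.
      apply/eqP; apply: contraTT hkK => hl; rewrite -leqNgt; apply: hmax.
      by rewrite hl andbT; move: hk; rewrite mem_iota add0n.
    rewrite mul0r ae_mul0 ae_mul0; rfl.
  - rewrite hkK subnn; rfl.
have hLa : L (Cst a).
  apply: (L_eqL hL _ _ (eqL_sym hL _ _ h1)); exact: ap_L.
apply: hnot1; apply: (L_aeq hL _ _ _ (L_cst hL a^-1 _ hLa)).
rewrite -ae_cstM mulVf //; rfl.
Qed.


Theorem proposition4p3 (q : C) (hq0 : q != 0)
    (hq : forall n : nat, (0 < n)%N -> q ^+ n != 1)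
    (mu mub : nat -> C) (L : term -> Prop) :
  irr_verma_quot q mu mub L -> fin_dim_quot q L ->
  mu 0%N != 0 /\ mub 0%N != 0.
Proof.
move=> [hL hgen hnot1 _] [bs [_ hspan]].
split; apply/negP => /eqP h0.
- have hS11 : L (S q i1 i1) by apply: hgen; exists 0%N; exact: Or31.
  have hS21' : L (Add (S q i2 i1) (Cst (- mu 0%N))) by apply: hgen; exists 0%N; exact: Or32.
  have hS21 : L (S q i2 i1).
    apply: (L_aeq hL _ _ _ hS21'); rewrite h0 oppr0 ae_addr0; rfl.
  have he : L (ee q) by apply: (L_mul hL _ _ (inY_Xi hq0) hS11).
  have hH : L (HH q).
    apply: (L_cst hL); apply: (L_add hL).
      apply: (L_mul hL _ _ (inY_ff hq0) he).
    apply: (L_cst hL); exact: (L_mul hL _ _ (inY_Xi hq0) hS21).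
  exact: (mu_part hq0 hq hL hnot1 hH he hspan) || exact: (@mu_part q hq0 hq L hL hnot1 hH he bs hspan).
- have hb : L (Add (sb_coef q i2 i1 0) (Cst (- mub 0%N))) by apply: hgen; exists 0%N; exact: Or33.
  apply: hnot1.
  have hY : inY q (Mul (Cst (- q)) (Xi q)) by apply: Y_mul; [exact: Y_cst | exact: inY_Xi].
  apply: (L_aeq hL _ _ _ (L_mul hL _ _ hY hb)).
  rewrite h0 oppr0 ae_addr0 (F3 q hq0); rfl.
Qed.
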